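(* Fix $\epsilon_2>0$ and $(u_\pm,v_\pm)$ with $v_\pm>0$ and $u_+<u_--2\epsilon_2$. Then there exists $\epsilon_0>0$ such that for every $0<\epsilon_1<\epsilon_0$ the state $(u_+,v_+)$ lies in the region $S_1S_2(u_-,v_-)$, i.e., the Riemann problem of the perturbed Brio system with data $(u_\pm,v_\pm)$ is solved by a backward shock $S_1$ followed by a forward shock $S_2$.
   Context: Perturbed Brio system: $u_t+(\tfrac12u^2+\tfrac12\epsilon_1v^2)_x=0$, $v_t+(uv-\epsilon_2v)_x=0$, $\epsilon_1,\epsilon_2>0$, $v>0$. Backward shock curve from $(u_-,v_-)$: $u=u_-+(v-v_-)\frac{\epsilon_2-\sqrt{\epsilon_2^2+4\epsilon_1(v+v_-)^2}}{v+v_-}$, $v>v_-$; forward shock curve: $u=u_-+(v-v_-)\frac{\epsilon_2+\sqrt{\epsilon_2^2+4\epsilon_1(v+v_-)^2}}{v+v_-}$, $0<v<v_-$. Being in $S_1S_2(u_-,v_-)$ means there is an intermediate state $(u_*,v_* )$ on the backward shock curve from $(u_-,v_-)$ such that $(u_+,v_+)$ lies on the forward shock curve from $(u_*,v_* )$. *)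

(* Defs.v *)
From Stdlib Require Import Reals.
Open Scope R_scope.

Definition backward_shock (e1 e2 um vm u v : R) : Prop :=
  v > vm /\
  u = um + (v - vm) * ((e2 - sqrt (e2 ^ 2 + 4 * e1 * (v + vm) ^ 2)) / (v + vm)).

Definition forward_shock (e1 e2 um vm u v : R) : Prop :=
  0 < v /\ v < vm /\
  u = um + (v - vm) * ((e2 + sqrt (e2 ^ 2 + 4 * e1 * (v + vm) ^ 2)) / (v + vm)).

Definition in_S1S2 (e1 e2 um vm up vp : R) : Prop :=
  exists us vs : R,
    backward_shock e1 e2 um vm us vs /\ forward_shock e1 e2 us vs up vp.

(* Main.v *)
Require Import Defs.
From Stdlib Require Import Reals.
From Stdlib Require Import Lra Psatz Ranalysis5.
Open Scope R_scope.

Lemma sqrt_bounds (a t X : R) : 0 < a -> 0 <= t -> 0 <= X ->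
  let s := sqrt (a ^ 2 + 4 * (t * t) * X ^ 2) in
  a <= s /\ 2 * t * X <= s /\ s <= a + 2 * t * X.
Proof.
  intros Ha Ht HX s.
  assert (H0 : 0 <= 4 * (t * t) * X ^ 2) by (apply Rmult_le_pos; [nra|nra]).
  split; [|split].
  - unfold s. rewrite <- (sqrt_pow2 a) at 1 by lra. apply sqrt_le_1_alt. nra.
  - unfold s. assert (0 <= t*X) by nra. rewrite <- (sqrt_pow2 (2*t*X)) at 1 by nra.
    apply sqrt_le_1_alt. nra.
  - unfold s. assert (0 <= t*X) by nra. rewrite <- (sqrt_pow2 (a + 2*t*X)) at 1 by nra.
    apply sqrt_le_1_alt. nra.
Qed.

Definition Bf (e1 e2 vm v : R) := (v - vm) * ((e2 - sqrt (e2 ^ 2 + 4 * e1 * (v + vm) ^ 2)) / (v + vm)).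
Definition Ff (e1 e2 vp v : R) := (vp - v) * ((e2 + sqrt (e2 ^ 2 + 4 * e1 * (vp + v) ^ 2)) / (vp + v)).

Lemma B_bounds e2 vm v t : 0 < e2 -> 0 < vm -> vm < v -> 0 <= t ->
  - 2 * t * (v - vm) <= Bf (t*t) e2 vm v <= 0.
Proof.
  intros He Hvm Hv Ht. unfold Bf.
  destruct (sqrt_bounds e2 t (v + vm) He Ht ltac:(lra)) as [H1 [H2 H3]].
  set (s := sqrt _) in *.
  set (q := (e2 - s) / (v + vm)).
  assert (Hq : q * (v + vm) = e2 - s) by (unfold q; field; lra).
  assert (q <= 0) by nra.
  assert (- 2 * t <= q) by nra.
  split; nra.
Qed.

Lemma F_bounds e2 vp v t : 0 < e2 -> 0 < vp -> vp < v -> 0 <= t ->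
  - (2 * e2) * ((v - vp) / (vp + v)) - 2 * t * (v - vp) <= Ff (t*t) e2 vp v <= - 2 * t * (v - vp).
Proof.
  intros He Hvp Hv Ht. unfold Ff.
  destruct (sqrt_bounds e2 t (vp + v) He Ht ltac:(lra)) as [H1 [H2 H3]].
  set (s := sqrt _) in *.
  set (q := (e2 + s) / (vp + v)).
  assert (Hq : q * (vp + v) = e2 + s) by (unfold q; field; lra).
  assert (2 * t <= q) by nra.
  assert (Hd : 0 < vp + v) by lra.
  assert (Hr : (2 * e2 / (vp + v)) * (vp + v) = 2 * e2) by (field; lra).
  assert (q <= 2 * e2 / (vp + v) + 2 * t).
  { apply Rmult_le_reg_r with (vp + v); [lra|]. rewrite Rmult_plus_distr_r, Hr. nra. }
  assert (Hw : (2 * e2) * ((v - vp) / (vp + v)) = (v - vp) * (2 * e2 / (vp + v))) by (field; lra).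
  assert (- (2 * e2) * ((v - vp) / (vp + v)) = - ((v - vp) * (2 * e2 / (vp + v)))) by (rewrite <- Hw; ring).
  split; nra.
Qed.

Theorem lemma6p1 (e2 um vm up vp : R) :
  0 < e2 -> 0 < vm -> 0 < vp -> up < um - 2 * e2 ->
  exists e0 : R, 0 < e0 /\
    forall e1 : R, 0 < e1 -> e1 < e0 -> in_S1S2 e1 e2 um vm up vp.
Proof.
  intros He Hvm Hvp Hup.
  set (c := 2 * e2 * vp / ((vm + 2 * vp) * (vm + vp))).
  assert (Hc : 0 < c) by (apply Rdiv_lt_0_compat; nra).
  assert (Hc2 : c * ((vm + 2 * vp) * (vm + vp)) = 2 * e2 * vp) by (unfold c; field; nra).
  exists (c * c). split.
  { nra. }
  intros e1 He1 He1'.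
  set (t := sqrt e1).
  assert (Ht : 0 < t) by (apply sqrt_lt_R0; lra).
  assert (Htt : t * t = e1) by (apply sqrt_sqrt; lra).
  assert (Htc : t < c) by nra.
  assert (Hr1 : (vm + vp - vp) / (vp + (vm + vp)) * (vm + 2 * vp) = vm) by (field; lra).
  assert (Ht2 : 2 * t * (vm + vp) + 2 * e2 * ((vm + vp - vp) / (vp + (vm + vp))) < 2 * e2).
  { set (r := (vm + vp - vp) / (vp + (vm + vp))) in *.
    assert (t * ((vm + 2 * vp) * (vm + vp)) < c * ((vm + 2 * vp) * (vm + vp))) by (apply Rmult_lt_compat_r; nra).
    assert (2 * t * (vm + vp) * (vm + 2 * vp) < 4 * e2 * vp) by nra.
    apply Rmult_lt_reg_r with (vm + 2 * vp); nra. }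
  set (g := fun v => up - (um + Bf e1 e2 vm v + Ff e1 e2 vp v)).
  set (v1 := vm + vp).
  set (v2 := vm + vp + (um - up) / (2 * t) + 1).
  assert (Hq : 0 < (um - up) / (2 * t)) by (apply Rdiv_lt_0_compat; lra).
  assert (Hq2 : (um - up) / (2 * t) * (2 * t) = um - up) by (field; lra).
  assert (Hv12 : v1 < v2) by (unfold v1, v2; lra).
  assert (Hg1 : g v1 < 0).
  { unfold g. rewrite <- Htt.
    destruct (B_bounds e2 vm v1 t He Hvm ltac:(unfold v1; lra) ltac:(lra)).
    destruct (F_bounds e2 vp v1 t He Hvp ltac:(unfold v1; lra) ltac:(lra)).
    unfold v1 in *. nra. }
  assert (Hg2 : 0 < g v2).
  { unfold g. rewrite <- Htt.
    destruct (B_bounds e2 vm v2 t He Hvm ltac:(unfold v2; lra) ltac:(lra)).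
    destruct (F_bounds e2 vp v2 t He Hvp ltac:(unfold v2; lra) ltac:(lra)).
    unfold v2 in *. nra. }
  destruct (IVT_interv g v1 v2) as [z [[Hz1 Hz2] Hz]]; auto.
  { intros a [Ha1 Ha2]. unfold g, Bf, Ff, v1 in *. reg.
    all: clear -He He1 Hvm Hvp Ha1; try lra.
    all: apply Rplus_le_le_0_compat; [apply pow_le; lra|apply Rmult_le_pos; [lra|apply pow2_ge_0]]. }
  exists (um + Bf e1 e2 vm z), z. unfold v1 in *.
  split.
  - split; [lra|]. reflexivity.
  - split; [lra|split; [lra|]].
    unfold g in Hz. unfold Ff in Hz. lra.
Qed.
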